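(* Consider the semidiscrete electroquasistatic system with circuit coupling, in the unknowns $\Phi(t)\in\mathbb{R}^{n_1}$, $v_C(t)\in\mathbb{R}^k$, $i_C(t)\in\mathbb{R}^k$: \begin{align*} Q_s^\top L_\sigma Q_s\Phi+Q_s^\top L_\varepsilon Q_s\tfrac{d}{dt}\Phi+Q_s^\top L_\sigma Y_s v_C+Q_s^\top L_\varepsilon Y_s\tfrac{d}{dt}v_C&=0,\\ Y_s^\top L_\sigma Q_s\Phi+Y_s^\top L_\varepsilon Q_s\tfrac{d}{dt}\Phi+Y_s^\top L_\sigma Y_s v_C+Y_s^\top L_\varepsilon Y_s\tfrac{d}{dt}v_C&=i_C, \end{align*} with internal variable $x_C=\Phi$. Under the assumptions listed in the context, this system is a strongly capacitance-like element.
   Context: Setting (spatial discretization of the electroquasistatic problem $\nabla\cdot\sigma\nabla\phi+\frac{d}{dt}\nabla\cdot\varepsilon\nabla\phi=0$ with homogeneous Dirichlet/Neumann conditions incorporated and terminal voltages $v_C$ prescribed on the contact boundary): $L_\sigma=\widetilde S M_\sigma\widetilde S^\top$ and $L_\varepsilon=\widetilde S M_\varepsilon\widetilde S^\top$ with $\widetilde S\in\mathbb{R}^{N\times m}$ (discrete dual divergence) such that the discrete gradient $G=-\widetilde S^\top$ has full column rank; $M_\varepsilon\in\mathbb{R}^{m\times m}$ is a symmetric positive definite permittivity matrix and $M_\sigma\in\mathbb{R}^{m\times m}$ a symmetric positive semidefinite conductivity matrix. The $N$ nodal degrees of freedom are split into those on the contact boundary and the rest: $Q_s\in\mathbb{R}^{N\times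 n_1}$ and $P_s\in\mathbb{R}^{N\times n_2}$ ($n_1+n_2=N$) are basis matrices of full column rank such that the columns of $Q_s$ and $P_s$ together are the distinct unit vectors of $\mathbb{R}^N$ (columns of $P_s$ for contact-boundary degrees of freedom). The contact boundary consists of $k$ pairwise disjoint terminals; $\Lambda_s\in\mathbb{R}^{n_2\times k}$ has entry $1$ in position $(i,j)$ if contact degree of freedom $i$ belongs to terminal $j$ and $0$ otherwise, and has full column rank; $Y_s=P_s\Lambda_s$. Definitions: a function $F(u,y)$ is strongly monotone with respect to $u$ if there is $c>0$ with $\langle F(u,y)-F(\bar u,y),u-\bar u\rangle\ge c\|u-\bar u\|^2$ for all $y,u,\bar u$. A capacitance-like element is one described by $f_C(\frac{d}{dt}d_C(x_C,i_C,v_C,t),x_C,i_C,v_C,t)=0$ such that at most one differentiation with respect to $t$ is needed to obtain $x_C'=\varphi_C(i_C',x_C,i_C,v_C,t)$, $v_C'=g_C(x_C,i_C,v_C,t)$; it is strongly capacitance-like if additionally $F_C(i_C',x_C,i_C,v_C,t):=\partial_{x_C}g_C(x_C,i_C,v_C,t)\varphi_C(i_C',x_C,i_C,v_C,t)+\partial_{i_C}g_C(x_C,i_C,v_C,t)i_C'$ is continuous and strongly monotone with respect to $i_C'$. *)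

(* Defs.v *)
From HB Require Import structures.
From mathcomp Require Import all_boot all_order all_algebra.
From mathcomp Require Import all_classical all_reals all_analysis.
Set Implicit Arguments. Unset Strict Implicit. Unset Printing Implicit Defensive.
Import Order.TTheory GRing.Theory Num.Theory.
Import numFieldNormedType.Exports.
Local Open Scope ring_scope.

Definition cdot (R : realType) (n : nat) (u w : 'cV[R]_n) : R :=
  \sum_(j < n) u j 0 * w j 0.

Definition strongly_monotone (R : realType) (n : nat) (Y : Type)
    (F : 'cV[R]_n -> Y -> 'cV[R]_n) : Prop :=
  exists c : R, 0 < c /\
    forall (y : Y) (u ub : 'cV[R]_n),
      c * cdot (u - ub) (u - ub) <= cdot (F u y - F ub y) (u - ub).

Definition element_solution (R : realType) (nx k md p : nat)
    (fC : 'cV[R]_md -> 'cV[R]_nx -> 'cV[R]_k -> 'cV[R]_k -> R -> 'cV[R]_p)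
    (dC : 'cV[R]_nx -> 'cV[R]_k -> 'cV[R]_k -> R -> 'cV[R]_md)
    (x : R -> 'cV[R]_nx) (i v : R -> 'cV[R]_k) : Prop :=
  (forall t, derivable x t 1) /\ (forall t, derivable i t 1) /\
  (forall t, derivable v t 1) /\
  (forall t, derivable (fun s => dC (x s) (i s) (v s) s) t 1) /\
  (forall t, fC (derive1 (fun s => dC (x s) (i s) (v s) s) t) (x t) (i t) (v t) t = 0).

(* Capacitance-like with witnesses phi_C, g_C: every solution satisfies
   x_C' = phi_C(i_C', x_C, i_C, v_C, t),  v_C' = g_C(x_C, i_C, v_C, t)
   (these relations are obtained from the element equations and at most
   their first time derivative). *)
Definition capacitance_like_with (R : realType) (nx k md p : nat)
    (fC : 'cV[R]_md -> 'cV[R]_nx -> 'cV[R]_k -> 'cV[R]_k -> R -> 'cV[R]_p)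
    (dC : 'cV[R]_nx -> 'cV[R]_k -> 'cV[R]_k -> R -> 'cV[R]_md)
    (phiC : 'cV[R]_k -> 'cV[R]_nx -> 'cV[R]_k -> 'cV[R]_k -> R -> 'cV[R]_nx)
    (gC : 'cV[R]_nx -> 'cV[R]_k -> 'cV[R]_k -> R -> 'cV[R]_k) : Prop :=
  forall (x : R -> 'cV[R]_nx) (i v : R -> 'cV[R]_k),
    element_solution fC dC x i v ->
    forall t, derive1 x t = phiC (derive1 i t) (x t) (i t) (v t) t /\
              derive1 v t = gC (x t) (i t) (v t) t.

Definition capacitance_like (R : realType) (nx k md p : nat)
    (fC : 'cV[R]_md -> 'cV[R]_nx -> 'cV[R]_k -> 'cV[R]_k -> R -> 'cV[R]_p)
    (dC : 'cV[R]_nx -> 'cV[R]_k -> 'cV[R]_k -> R -> 'cV[R]_md) : Prop :=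
  exists phiC gC, capacitance_like_with fC dC phiC gC.

Definition FC_of (R : realType) (nx k : nat)
    (phiC : 'cV[R]_k -> 'cV[R]_nx -> 'cV[R]_k -> 'cV[R]_k -> R -> 'cV[R]_nx)
    (gC : 'cV[R]_nx -> 'cV[R]_k -> 'cV[R]_k -> R -> 'cV[R]_k)
    (di : 'cV[R]_k) (x : 'cV[R]_nx) (i v : 'cV[R]_k) (t : R) : 'cV[R]_k :=
  'd (fun x' => gC x' i v t) x (phiC di x i v t) + 'd (fun i' => gC x i' v t) i di.

Definition strongly_capacitance_like (R : realType) (nx k md p : nat)
    (fC : 'cV[R]_md -> 'cV[R]_nx -> 'cV[R]_k -> 'cV[R]_k -> R -> 'cV[R]_p)
    (dC : 'cV[R]_nx -> 'cV[R]_k -> 'cV[R]_k -> R -> 'cV[R]_md) : Prop :=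
  exists phiC gC,
    capacitance_like_with fC dC phiC gC /\
    (forall x i v t, differentiable (fun x' => gC x' i v t) x /\
                     differentiable (fun i' => gC x i' v t) i) /\
    continuous (fun a : 'cV[R]_k * ('cV[R]_nx * ('cV[R]_k * ('cV[R]_k * R))) =>
                  FC_of phiC gC a.1 a.2.1 a.2.2.1 a.2.2.2.1 a.2.2.2.2) /\
    strongly_monotone (fun (di : 'cV[R]_k) (y : 'cV[R]_nx * ('cV[R]_k * ('cV[R]_k * R))) =>
                  FC_of phiC gC di y.1 y.2.1 y.2.2.1 y.2.2.2).

Definition sym_pos_def (R : realType) (m : nat) (M : 'M[R]_m) : Prop :=
  M^T = M /\ forall u : 'cV[R]_m, u != 0 -> 0 < (u^T *m M *m u) 0 0.
Definition sym_pos_semidef (R : realType) (m : nat) (M : 'M[R]_m) : Prop :=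
  M^T = M /\ forall u : 'cV[R]_m, 0 <= (u^T *m M *m u) 0 0.

Definition eqs_dC (R : realType) (n1 k : nat)
    (x : 'cV[R]_n1) (i v : 'cV[R]_k) (t : R) : 'cV[R]_(n1 + k) := col_mx x v.

Definition eqs_fC (R : realType) (N n1 k : nat)
    (Lsig Leps : 'M[R]_N) (Qs : 'M[R]_(N, n1)) (Ys : 'M[R]_(N, k))
    (d : 'cV[R]_(n1 + k)) (x : 'cV[R]_n1) (i v : 'cV[R]_k) (t : R)
    : 'cV[R]_(n1 + k) :=
  col_mx
    (Qs^T *m Lsig *m Qs *m x + Qs^T *m Leps *m Qs *m usubmx d
       + Qs^T *m Lsig *m Ys *m v + Qs^T *m Leps *m Ys *m dsubmx d)
    (Ys^T *m Lsig *m Qs *m x + Ys^T *m Leps *m Qs *m usubmx d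
       + Ys^T *m Lsig *m Ys *m v + Ys^T *m Leps *m Ys *m dsubmx d - i).

(* Main.v *)
Require Import Defs.
From HB Require Import structures.
From mathcomp Require Import all_boot all_order all_algebra.
From mathcomp Require Import all_classical all_reals all_analysis.
From mathcomp Require Import ring lra.
Import Order.TTheory GRing.Theory Num.Theory.
Import numFieldNormedType.Exports.
Local Open Scope ring_scope.

Section H.
Variable R : realType.

Lemma fst_cont (T U : topologicalType) : continuous (@fst T U).
Proof. move=> x; exact: cvg_fst. Qed.
Lemma snd_cont (T U : topologicalType) : continuous (@snd T U).
Proof. move=> x; exact: cvg_snd. Qed.

Lemma mx_cont_entries (T : topologicalType) m n (f : T -> 'M[R]_(m, n)) :
  (forall i j, continuous (fun t => f t i j)) -> continuous f.
Proof.
move=> fc x A /nbhs_ballP [e e0 eA].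
have H : \forall t \near x, forall i j, ball (f x i j) e (f t i j).
  apply: filter_forall => i; apply: filter_forall => j.
  exact: (fc i j x _ (nbhsx_ballx _ _ e0)).
apply: filterS H => t Ht; apply: eA; split => // i j; exact: Ht.
Qed.

Lemma sum_cont (T : topologicalType) n (g : 'I_n -> T -> R) :
  (forall l, continuous (g l)) -> continuous (fun t => \sum_l g l t).
Proof.
move=> gc; elim: n g gc => [|n IH] g gc.
  under eq_fun do rewrite big_ord0; exact: cst_continuous.
under eq_fun do rewrite big_ord_recr /=.
move=> x; apply: (@continuousD _ _ _ (fun t => \sum_(i < n) g (widen_ord (leqnSn n) i) t) (g ord_max)).
  by apply: IH => l; apply: gc.
exact: gc.
Qed.

Lemma mulmx_cont m n p (A : 'M[R]_(m, n)) :
  continuous (fun x : 'M[R]_(n, p) => A *m x).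
Proof.
apply: mx_cont_entries => i j.
under eq_fun do rewrite mxE.
apply: sum_cont => l x.
apply: continuousM; [exact: cst_continuous | exact: coord_continuous].
Qed.

Lemma usub_cont m n p : continuous (@usubmx R m n p).
Proof.
apply: mx_cont_entries => i j; under eq_fun do rewrite mxE; exact: coord_continuous.
Qed.
Lemma dsub_cont m n p : continuous (@dsubmx R m n p).
Proof.
apply: mx_cont_entries => i j; under eq_fun do rewrite mxE; exact: coord_continuous.
Qed.

Lemma diff_aff n p q (A : 'M[R]_(n, p)) (c : 'M[R]_(n, q)) (x : 'M[R]_(p, q)) :
  differentiable (fun y => A *m y + c) x /\
  forall y, 'd (fun y => A *m y + c) x y = A *m y.
Proof.
have dl : forall y, differentiable (@mulmx _ n p q A) y.
  by move=> y; apply: linear_differentiable; apply: mulmx_cont.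
have -> : (fun y => A *m y + c) = (@mulmx _ n p q A) + cst c by apply/funext.
split; first by apply: differentiableD.
have E := diffD (dl x) (differentiable_cst c x).
move=> y; have Ey := congr1 (fun h => h y) E.
have E2 := congr1 (fun h => h y) (diff_cst c x).
have E3 := congr1 (fun h => h y) (diff_lin x (@mulmx_cont n p q A)).
simpl in Ey, E2, E3.
apply: (etrans Ey); apply: (etrans (congr2 +%R E3 E2)); exact: addr0.
Qed.

Lemma derive1_lin m n p q (L : {linear 'M[R]_(m, n) -> 'M[R]_(p, q)}) (f : R -> 'M[R]_(m, n)) t :
  continuous L -> derivable f t 1 -> derive1 (fun s => L (f s)) t = L (derive1 f t).
Proof.
move=> Lc /derivable1_diffP df.
have dL : differentiable L (f t) by exact: linear_differentiable.
rewrite derive1E'; last exact: (differentiable_comp df dL).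
rewrite derive1E' // (diff_comp df dL) /= diff_lin //.
Qed.

End H.

Section A.
Variable R : realType.

Lemma quad_disc (a p q : R) : 0 <= q ->
  (forall l, 0 <= a + 2 * l * p + l ^+ 2 * q) -> p ^+ 2 <= a * q.
Proof.
move=> q0 H.
have [qp|qe] : 0 < q \/ q = 0.
  by case: (ltrgt0P q) => [?|?|->]; [left|lra|right].
  have H' := H (- p / q).
  have lq : (- p / q) * q = - p by rewrite divfK // gt_eqF.
  have E : a + 2 * (- p / q) * p + (- p / q) ^+ 2 * q = a - p ^+ 2 / q.
    by field; rewrite gt_eqF.
  rewrite E in H'.
  have := mulr_ge0 (ltW qp) H'.
  have -> : q * (a - p ^+ 2 / q) = a * q - p ^+ 2 by field; rewrite gt_eqF.
  lra.
rewrite qe mulr0.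
have [p0|pn0] := eqVneq p 0; first by rewrite p0 expr0n.
have a0 : 0 <= a by have := H 0; rewrite qe; lra.
have := H (- (a + 1) / (2 * p)); rewrite qe mulr0 addr0.
have -> : 2 * (- (a + 1) / (2 * p)) * p = - (a + 1) by field.
lra.
Qed.

Variable n : nat.
Variable K : 'M[R]_n.
Hypothesis KT : K^T = K.
Hypothesis Kpsd : forall u : 'cV[R]_n, 0 <= (u^T *m K *m u) 0 0.

Definition bf (x y : 'cV[R]_n) := (x^T *m K *m y) 0 0.

Lemma addmx00 (A B : 'M[R]_1) : (A + B) 0 0 = A 0 0 + B 0 0.
Proof. by rewrite mxE. Qed.
Lemma scalemx00 l (A : 'M[R]_1) : (l *: A) 0 0 = l * A 0 0.
Proof. by rewrite mxE. Qed.

Lemma bf_sym x y : bf x y = bf y x.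
Proof.
rewrite /bf -[in LHS](trmxK (x^T *m K *m y)) mxE.
by rewrite !trmx_mul trmxK KT mulmxA.
Qed.

Lemma bf_exp x y l : bf (x + l *: y) (x + l *: y) = bf x x + 2 * l * bf x y + l ^+ 2 * bf y y.
Proof.
rewrite /bf [(x + _)^T]linearD /= [(l *: y)^T]linearZ /= !mulmxDl !mulmxDr -!scalemxAl -!scalemxAr.
rewrite !addmx00 !scalemx00.
have := bf_sym y x; rewrite /bf => ->.
ring.
Qed.

Lemma cs x y : bf x y ^+ 2 <= bf x x * bf y y.
Proof.
apply: quad_disc; first exact: Kpsd.
move=> l; rewrite -bf_exp; exact: Kpsd.
Qed.

Lemma trbound z : ((z^T *m K) *m (K *m z)) 0 0 <= \tr K * bf z z.
Proof.
have e1 : z^T *m K = (K *m z)^T by rewrite trmx_mul KT.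
rewrite e1 mxE /mxtrace mulr_suml.
apply: ler_sum => j _.
have ej : (K *m z) j 0 = bf (delta_mx j 0) z.
  by rewrite /bf trmx_delta -mulmxA -rowE [RHS]mxE.
have ejj : K j j = bf (delta_mx j 0) (delta_mx j 0).
  by rewrite /bf trmx_delta -rowE -colE !mxE.
rewrite [(K *m z)^T 0 j]mxE ej ejj -expr2 bf_sym [bf z _]bf_sym.
exact: cs.
Qed.

End A.

Section G.
Variable R : realType.
Variables N n1 k : nat.
Variables (Ls Le : 'M[R]_N) (Q : 'M[R]_(N, n1)) (Y : 'M[R]_(N, k)).

Lemma perm4 (V : nmodType) (a b c d : V) : a + b + c + d = (b + d) + (a + c).
Proof. by rewrite [RHS]addrC addrACA !addrA. Qed.

Lemma fC_eq d x i v t :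
  eqs_fC Ls Le Q Y d x i v t =
  (row_mx Q Y)^T *m Le *m row_mx Q Y *m d + (row_mx Q Y)^T *m Ls *m row_mx Q Y *m col_mx x v
  - col_mx 0 i.
Proof.
rewrite -[d in RHS](vsubmxK d) tr_row_mx !mul_col_mx !mul_mx_row !mul_row_col.
rewrite opp_col_mx !add_col_mx oppr0 addr0 /eqs_fC.
apply: f_equal2; first by rewrite perm4.
by rewrite [X in X - i]perm4.
Qed.

Lemma usub_mul m p q (A : 'M[R]_(m + p, q)) r (B : 'M[R]_(q, r)) : usubmx (A *m B) = usubmx A *m B.
Proof. by rewrite -{1}(vsubmxK A) mul_col_mx col_mxKu. Qed.
Lemma dsub_mul m p q (A : 'M[R]_(m + p, q)) r (B : 'M[R]_(q, r)) : dsubmx (A *m B) = dsubmx A *m B.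
Proof. by rewrite -{1}(vsubmxK A) mul_col_mx col_mxKd. Qed.

End G.



Lemma cont_mul (R : realType) (T : topologicalType) m n p (A : 'M[R]_(m,n)) (f : T -> 'M[R]_(n,p)) :
  continuous f -> continuous (fun a => A *m f a).
Proof. move=> fc x; apply: (continuous_comp (fc x)); exact: mulmx_cont. Qed.
Lemma cont_add (R : realType) (T : topologicalType) m n (f g : T -> 'M[R]_(m,n)) :
  continuous f -> continuous g -> continuous (fun a => f a + g a).
Proof. move=> fc gc x; exact: (continuousD (fc x) (gc x)). Qed.

Lemma lin_rearr (R : realType) (n p q : nat) (Ki J : 'M[R]_n) (E1 : 'M[R]_(n,p)) (E2 : 'M[R]_(n,q)) (x : 'cV[R]_p) (i v : 'cV[R]_q) :
  Ki *m (E2 *m i - J *m (E1 *m x + E2 *m v)) =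
  - (Ki *m J *m E1) *m x + Ki *m E2 *m i + - (Ki *m J *m E2) *m v.
Proof.
rewrite mulmxBr !mulmxDr !mulmxA !mulNmx opprD addrA.
by rewrite (addrC (Ki *m E2 *m i)).
Qed.

Lemma comp_cont (A B C : topologicalType) (f : A -> B) (g : B -> C) :
  continuous f -> continuous g -> continuous (g \o f).
Proof. by move=> fc gc x; exact: (continuous_comp (fc x) (gc (f x))). Qed.

Lemma cont_snd_lift {T U V : topologicalType} {h : U -> V} :
  continuous h -> continuous (fun a : T * U => h a.2).
Proof. by move=> hc a; apply: cvg_comp; [exact: cvg_snd | exact: hc]. Qed.

Lemma generic (R : realType) N n1 k (Ls Le : 'M[R]_N) (Q : 'M[R]_(N,n1)) (Y : 'M[R]_(N,k)) :
  let K := (row_mx Q Y)^T *m Le *m row_mx Q Y in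
  K^T = K -> (forall u : 'cV[R]_(n1 + k), 0 <= (u^T *m K *m u) 0 0) -> K \in unitmx ->
  strongly_capacitance_like (eqs_fC Ls Le Q Y) (@eqs_dC R n1 k).
Proof.
move=> K KT Kpsd Ku.
set J := (row_mx Q Y)^T *m Ls *m row_mx Q Y.
pose Ki := invmx K.
pose E1 : 'M[R]_(n1 + k, n1) := col_mx 1%:M 0.
pose E2 : 'M[R]_(n1 + k, k) := col_mx 0 1%:M.
pose F1 := - (Ki *m J *m E1). pose F2 := Ki *m E2. pose F3 := - (Ki *m J *m E2).
pose phi := fun (di : 'cV[R]_k) (x : 'cV[R]_n1) (i v : 'cV[R]_k) (t : R) =>
  usubmx F1 *m x + usubmx F2 *m i + usubmx F3 *m v.
pose g := fun (x : 'cV[R]_n1) (i v : 'cV[R]_k) (t : R) =>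
  dsubmx F1 *m x + dsubmx F2 *m i + dsubmx F3 *m v.
have solve : forall d x i v t, eqs_fC Ls Le Q Y d x i v t = 0 ->
    d = F1 *m x + F2 *m i + F3 *m v.
  move=> d x i v t; rewrite fC_eq -/K -/J => /eqP; rewrite subr_eq0 => /eqP H.
  have Hd : K *m d = col_mx 0 i - J *m col_mx x v by rewrite -H addrK.
  rewrite -(mulKmx Ku d) Hd.
  have -> : col_mx 0 i = E2 *m i by rewrite /E2 mul_col_mx mul0mx mul1mx.
  have -> : col_mx x v = E1 *m x + E2 *m v.
    by rewrite /E1 /E2 !mul_col_mx !mul0mx !mul1mx add_col_mx addr0 add0r.
  exact: lin_rearr.
exists phi, g; split.
  move=> x i v [dx [di [dv [dD H]]]] t.
  have Ht := H t; rewrite /eqs_dC in Ht.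
  have Ed := solve _ _ _ _ _ Ht.
  have ex : derive1 x t = usubmx (derive1 (fun s => eqs_dC (x s) (i s) (v s) s) t).
    rewrite -(@derive1_lin _ _ _ _ _ usubmx _ _ (@usub_cont _ _ _ _) (dD t)).
    have -> : (fun s => usubmx (eqs_dC (x s) (i s) (v s) s)) = x by apply/funext => s; rewrite /eqs_dC col_mxKu.
    by [].
  have ev : derive1 v t = dsubmx (derive1 (fun s => eqs_dC (x s) (i s) (v s) s) t).
    rewrite -(@derive1_lin _ _ _ _ _ dsubmx _ _ (@dsub_cont _ _ _ _) (dD t)).
    have -> : (fun s => dsubmx (eqs_dC (x s) (i s) (v s) s)) = v by apply/funext => s; rewrite /eqs_dC col_mxKd.
    by [].
  rewrite ex ev /eqs_dC Ed /phi /g; split.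
    by rewrite !linearD /= !usub_mul.
  by rewrite !linearD /= !dsub_mul.
have gx : forall i v t, (fun x' => g x' i v t) =
    (fun y => dsubmx F1 *m y + (dsubmx F2 *m i + dsubmx F3 *m v)).
  by move=> i v t; apply/funext => y; rewrite /g addrA.
have gi : forall x v t, (fun i' => g x i' v t) =
    (fun y => dsubmx F2 *m y + (dsubmx F1 *m x + dsubmx F3 *m v)).
  by move=> x v t; apply/funext => y; rewrite /g addrA (addrC (dsubmx F2 *m y)).
have FCe : forall di x i v t,
    FC_of phi g di x i v t = dsubmx F1 *m phi di x i v t + dsubmx F2 *m di.
  move=> di x i v t; rewrite /FC_of gx gi.
  rewrite (proj2 (diff_aff _ _ _ _ _ _ _)).
  by rewrite (proj2 (diff_aff _ _ _ _ _ _ _)).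
split.
  move=> x i v t; rewrite gx gi; split; exact: (proj1 (diff_aff _ _ _ _ _ _ _)).
split.
  under eq_fun do rewrite FCe.
  rewrite /phi.
  have p1 : continuous (fun a : 'cV[R]_k * ('cV[R]_n1 * ('cV[R]_k * ('cV[R]_k * R))) => a.1).
    exact: fst_cont.
  have p2 : continuous (fun a : 'cV[R]_k * ('cV[R]_n1 * ('cV[R]_k * ('cV[R]_k * R))) => a.2.1).
    by move=> a; apply: cvg_comp; [exact: cvg_snd | exact: cvg_fst].
  have p3 : continuous (fun a : 'cV[R]_k * ('cV[R]_n1 * ('cV[R]_k * ('cV[R]_k * R))) => a.2.2.1).
    exact: (cont_snd_lift (cont_snd_lift (@fst_cont _ _))).
  have p4 : continuous (fun a : 'cV[R]_k * ('cV[R]_n1 * ('cV[R]_k * ('cV[R]_k * R))) => a.2.2.2.1).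
    exact: (cont_snd_lift (cont_snd_lift (cont_snd_lift (@fst_cont _ _)))).
  apply: cont_add; apply: cont_mul => //.
  by apply: cont_add; [apply: cont_add|]; apply: cont_mul.
have tr0 : 0 <= \tr K.
  rewrite /mxtrace; apply: sumr_ge0 => j _.
  by have := Kpsd (delta_mx j 0); rewrite trmx_delta -rowE -colE !mxE.
have t1 : 0 < 1 + \tr K by lra.
exists (1 / (1 + \tr K)); split; first by rewrite divr_gt0.
move=> y u ub; rewrite !FCe /phi /=.
have -> : forall a b c : 'cV[R]_k, a + b - (a + c) = b - c.
  by move=> a b c; rewrite opprD addrACA subrr add0r.
rewrite -mulmxBr; set w := u - ub.
have cdotE : forall p (a b : 'cV[R]_p), cdot a b = (a^T *m b) 0 0.
  by move=> p a b; rewrite /cdot [RHS]mxE; apply: eq_bigr => j _; rewrite mxE.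
rewrite !cdotE.
set e := col_mx (0 : 'cV[R]_n1) w.
pose z := Ki *m e.
have Ez : dsubmx F2 *m w = dsubmx z by rewrite -dsub_mul /F2 -mulmxA /E2 mul_col_mx mul0mx mul1mx.
have c1 : ((dsubmx z)^T *m w) 0 0 = (z^T *m e) 0 0.
  by rewrite -[z in RHS]vsubmxK tr_col_mx mul_row_col mulmx0 add0r.
have c2 : (w^T *m w) 0 0 = (e^T *m e) 0 0.
  by rewrite tr_col_mx mul_row_col mulmx0 add0r.
have Ke : K *m z = e by rewrite /z /Ki mulKVmx.
rewrite Ez c1 c2 -Ke trmx_mul KT mulmxA.
have hb := trbound _ _ _ KT Kpsd z.
have hb0 := Kpsd z.
rewrite /bf in hb.
have eX : (z^T *m K *m K *m z) 0 0 = ((z^T *m K) *m (K *m z)) 0 0.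
  exact: (congr1 (fun M : 'M[R]_1 => M 0 0) (esym (mulmxA (z^T *m K) K z))).
have eY : (z^T *m (K *m z)) 0 0 = (z^T *m K *m z) 0 0.
  exact: (congr1 (fun M : 'M[R]_1 => M 0 0) (mulmxA z^T K z)).
rewrite eX eY.
move: hb hb0; set X := ((z^T *m K) *m (K *m z)) 0 0; set Yv := (z^T *m K *m z) 0 0.
move=> hb hb0.
set c := 1 / (1 + \tr K).
have hc : c * (1 + \tr K) = 1 by rewrite /c mul1r mulVf // gt_eqF.
have c0 : 0 < c by rewrite /c divr_gt0.
have := ler_wpM2l (ltW c0) hb.
have ee : c * (\tr K * Yv) + c * Yv = Yv.
  by rewrite mulrA -mulrDl -{2}(mulr1 c) -mulrDr addrC hc mul1r.
have := mulr_ge0 (ltW c0) hb0.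
lra.
Qed.



Lemma sel (R : realType) (m p : nat) (f : 'I_m -> 'I_p) (w : 'cV[R]_m) r :
  ((\matrix_(r0, c) (r0 == f c)%:R) *m w) r 0 = \sum_c (r == f c)%:R * w c 0.
Proof. by rewrite mxE; apply: eq_bigr => c _; rewrite mxE. Qed.

Lemma sel_in (R : realType) (m p : nat) (f : 'I_m -> 'I_p) (w : 'cV[R]_m) c :
  injective f -> ((\matrix_(r0, c) (r0 == f c)%:R) *m w) (f c) 0 = w c 0.
Proof.
move=> inj; rewrite sel (bigD1 c) //= eqxx mul1r big1 ?addr0 // => c' /negbTE.
by rewrite (inj_eq inj) eq_sym => ->; rewrite mul0r.
Qed.

Lemma sel_out (R : realType) (m p : nat) (f : 'I_m -> 'I_p) (w : 'cV[R]_m) r :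
  (forall c, r != f c) -> ((\matrix_(r0, c) (r0 == f c)%:R) *m w) r 0 = 0.
Proof. by move=> H; rewrite sel big1 // => c _; rewrite (negbTE (H c)) mul0r. Qed.

Lemma addE (R : realType) m n (A B : 'M[R]_(m, n)) i j : (A + B) i j = A i j + B i j.
Proof. by rewrite mxE. Qed.

Theorem proposition8 (R : realType) (N m n1 n2 k : nat)
    (St : 'M[R]_(N, m)) (Meps Msig : 'M[R]_m)
    (Qs : 'M[R]_(N, n1)) (Ps : 'M[R]_(N, n2)) (Lam : 'M[R]_(n2, k))
    (fq : 'I_n1 -> 'I_N) (fp : 'I_n2 -> 'I_N) (term : 'I_n2 -> 'I_k) :
  \rank (- St^T) = N ->
  sym_pos_def Meps ->
  sym_pos_semidef Msig ->
  (n1 + n2 = N)%N ->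
  injective fq -> injective fp ->
  (forall a b, fq a != fp b) ->
  (forall c : 'I_N, (exists a, fq a = c) \/ (exists b, fp b = c)) ->
  Qs = \matrix_(r, c) (r == fq c)%:R ->
  Ps = \matrix_(r, c) (r == fp c)%:R ->
  Lam = \matrix_(r, c) (term r == c)%:R ->
  \rank Lam = k ->
  strongly_capacitance_like
    (eqs_fC (St *m Msig *m St^T) (St *m Meps *m St^T) Qs (Ps *m Lam))
    (@eqs_dC R n1 k).
Proof.
move=> rkSt [MeT Mepd] _ _ injq injp qp _ EQ EP _ rkL.
have Wi : forall u : 'cV[R]_(n1 + k), row_mx Qs (Ps *m Lam) *m u = 0 -> u = 0.
  move=> u; rewrite -[u](vsubmxK u) mul_row_col -mulmxA.
  set a := usubmx u; set b := dsubmx u => H.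
  have ha : a = 0.
    apply/matrixP => c j; rewrite (ord1 j) [RHS]mxE.
    have := congr1 (fun M : 'cV[R]_N => M (fq c) 0) H.
    rewrite /= addE EQ EP sel_in // sel_out ?addr0 ?mxE //.
  have hL : Lam *m b = 0.
    apply/matrixP => j z; rewrite (ord1 z) [RHS]mxE.
    have := congr1 (fun M : 'cV[R]_N => M (fp j) 0) H.
    rewrite /= addE EQ EP sel_in // sel_out ?add0r ?mxE // => c.
    by rewrite eq_sym qp.
  have rfL : row_free Lam^T by rewrite /row_free mxrank_tr rkL.
  have : b^T *m Lam^T == 0 by rewrite -trmx_mul hL trmx0.
  rewrite mulmx_free_eq0 // => /eqP h.
  have hb : b = 0 by rewrite -(trmxK b) h trmx0.
  by rewrite ha hb col_mx0.
have Sti : forall y : 'cV[R]_N, St^T *m y = 0 -> y = 0.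
  move=> y H.
  have rf : row_free St by rewrite /row_free -mxrank_tr -mxrank_opp rkSt.
  have : y^T *m St == 0 by rewrite -[St]trmxK -trmx_mul H trmx0.
  rewrite mulmx_free_eq0 // => /eqP h.
  by rewrite -(trmxK y) h trmx0.
have Kq : forall u : 'cV[R]_(n1 + k),
    (u^T *m ((row_mx Qs (Ps *m Lam))^T *m (St *m Meps *m St^T) *m row_mx Qs (Ps *m Lam)) *m u) 0 0
    = ((St^T *m (row_mx Qs (Ps *m Lam) *m u))^T *m Meps *m (St^T *m (row_mx Qs (Ps *m Lam) *m u))) 0 0.
  by move=> u; rewrite !trmx_mul trmxK !mulmxA.
have Kpd : forall u : 'cV[R]_(n1 + k), u != 0 ->
    0 < (u^T *m ((row_mx Qs (Ps *m Lam))^T *m (St *m Meps *m St^T) *m row_mx Qs (Ps *m Lam)) *m u) 0 0.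
  move=> u un0; rewrite Kq; apply: Mepd.
  apply/eqP => h; move/eqP: un0; apply; exact: Wi (Sti _ h).
have Kpsd : forall u : 'cV[R]_(n1 + k),
    0 <= (u^T *m ((row_mx Qs (Ps *m Lam))^T *m (St *m Meps *m St^T) *m row_mx Qs (Ps *m Lam)) *m u) 0 0.
  move=> u; have [->|un0] := eqVneq u 0; first by rewrite mulmx0 mxE.
  exact: ltW (Kpd u un0).
have KT : ((row_mx Qs (Ps *m Lam))^T *m (St *m Meps *m St^T) *m row_mx Qs (Ps *m Lam))^T
    = (row_mx Qs (Ps *m Lam))^T *m (St *m Meps *m St^T) *m row_mx Qs (Ps *m Lam).
  by rewrite !trmx_mul !trmxK MeT !mulmxA.
have Ku : (row_mx Qs (Ps *m Lam))^T *m (St *m Meps *m St^T) *m row_mx Qs (Ps *m Lam) \in unitmx.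
  rewrite unitmxE unitfE; apply/negP => /det0P [v vn0 vK0].
  have vT0 : v^T != 0.
    by apply: contra vn0 => /eqP h; apply/eqP; rewrite -(trmxK v) h trmx0.
  by have := Kpd _ vT0; rewrite trmxK vK0 mul0mx mxE ltxx.
exact: (generic _ _ _ _ _ _ _ _ KT Kpsd Ku).
Qed.
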